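(* Consider the time-minimization problem $T\to\min$ for the control system on the upper half-plane $L^2=\{(x,y)\in\mathbb{R}^2: y>0\}$ $$\dot x = y u_1,\qquad \dot y = y u_2,\qquad u=(u_1,u_2)\in\Omega,$$ where $\Omega\subset\mathbb{R}^2$ is a convex compact set with $0\in\operatorname{int}\Omega$. Every geodesic (trajectory of an extremal given by the Pontryagin maximum principle for this problem) is of one of the following two types: (h) Horizontal geodesics: such a geodesic is obtained from the polar set $\Omega^\circ$ by (i) rotating $\Omega^\circ$ by $+90^\circ$ or $-90^\circ$ about the origin, (ii) stretching it by a factor $\lambda>0$, (iii) taking the part of the boundary of the resulting set lying in the upper half-plane, and (iv) translating this part horizontally by an arbitrary distance; the geodesic moves along (a piece of) this curve. If $\Omega^\circ$ was rotated clockwise then the motion along the geodesic is counterclockwise, and vice versa. (v) Vertical geodesics: a vertical geodesic moving up is obtained by choosing an arbitrary measurable control $u(t)\in\Omega$ such that, for a.e. $t$, $u(t)$ has the maximal possible $u_2$-coordinate among points of $\Omega$ (so $u_2$ is a constant); the corresponding geodesic starting at $(x_0,y_0)$ is $$x(t)=x_0+y_0\int_0^t e^{u_2 s}u_1(s)\,ds,\qquad y(t)=y_0e^{u_2 t}.$$ Vertical geodesics moving down are constructed in the same way, taking $u(t)\in\Omega$ with the minimal possible $u_2$-coordinate in $\Omega$ for all $t$.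
   Context: The polar set of $\Omega$ is $\Omega^\circ=\{(p,q)\in\mathbb{R}^2: px+qy\le 1 \text{ for all } (x,y)\in\Omega\}$. The problem defines a Finsler structure on $L^2$ in which the length of a tangent vector $(\xi,\eta)$ at $(x,y)$ is $y\,\mu_\Omega(\xi,\eta)$, $\mu_\Omega$ being the Minkowski gauge of $\Omega$. *)

(* Defs.v *)
(* Points of R^2 are pairs (R * R) with the
   product (= Euclidean) topology; time measure = Lebesgue measure on R. *)
From HB Require Import structures.
From mathcomp Require Import all_boot all_order all_algebra.
From mathcomp Require Import all_classical all_reals all_analysis.
Set Implicit Arguments. Unset Strict Implicit. Unset Printing Implicit Defensive.
Import Order.TTheory GRing.Theory Num.Theory.
Import numFieldNormedType.Exports.
Local Open Scope classical_set_scope.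
Local Open Scope ring_scope.

Section Defs.
Variable R : realType.
Local Notation mu := (@lebesgue_measure R).

Definition dotp (a b : R * R) : R := a.1 * b.1 + a.2 * b.2.
Definition cross (a b : R * R) : R := a.1 * b.2 - a.2 * b.1.

Definition convex2 (Om : set (R * R)) : Prop :=
  forall (a b : R * R) (t : R), Om a -> Om b -> 0 <= t <= 1 ->
    Om (t * a.1 + (1 - t) * b.1, t * a.2 + (1 - t) * b.2).

Definition polar_set (Om : set (R * R)) : set (R * R) :=
  [set p | forall w, Om w -> dotp p w <= 1].

Definition bd (A : set (R * R)) : set (R * R) := closure A `\` interior A.

(* rotation by s * 90 degrees about the origin: s = 1 counterclockwise (+90),
   s = -1 clockwise (-90) *)
Definition rot90 (s : R) (w : R * R) : R * R := (- (s * w.2), s * w.1).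

(* Pontryagin extremal of the time-minimal problem
     xdot = y u1, ydot = y u2, u in Om,
   on the time interval [0,T]: (x,y) is the trajectory (Caratheodory solution),
   u a measurable admissible control, (px, py t) the adjoint covector.
   Hamiltonian H = px y u1 + py y u2 ; adjoint equations
     pxdot = -dH/dx = 0 (so px is constant),
     pydot = -dH/dy = -(px u1 + py u2);
   maximum condition a.e., constant nonnegative value of max H
   (time-optimal problem: H = -psi0 >= 0), and psi(t) <> 0. *)
Definition pmp_extremal (Om : set (R * R)) (T : R) (x y : R -> R)
    (u : R -> R * R) (px : R) (py : R -> R) : Prop :=
  0 < T /\
  (forall t, `[0, T]%classic t -> 0 < y t) /\
  (forall t, `[0, T]%classic t -> Om (u t)) /\
  (measurable_fun `[0, T]%classic (fun t => (u t).1) /\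
   measurable_fun `[0, T]%classic (fun t => (u t).2)) /\
  (mu.-integrable `[0, T]%classic (fun s => (y s * (u s).1)%:E) /\
   mu.-integrable `[0, T]%classic (fun s => (y s * (u s).2)%:E) /\
   mu.-integrable `[0, T]%classic (fun s => (px * (u s).1 + py s * (u s).2)%:E)) /\
  (forall t, `[0, T]%classic t ->
     (x t)%:E = ((x 0)%:E + \int[mu]_(s in `[0%R, t]%classic) (y s * (u s).1)%:E)%E) /\
  (forall t, `[0, T]%classic t ->
     (y t)%:E = ((y 0)%:E + \int[mu]_(s in `[0%R, t]%classic) (y s * (u s).2)%:E)%E) /\
  (forall t, `[0, T]%classic t ->
     (py t)%:E = ((py 0)%:E -
       \int[mu]_(s in `[0%R, t]%classic) (px * (u s).1 + py s * (u s).2)%:E)%E) /\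
  (forall t, `[0, T]%classic t -> (px, py t) <> (0, 0)) /\
  exists h : R, 0 <= h /\
    {ae mu, forall t, `[0, T]%classic t ->
       (forall v, Om v -> y t * dotp (px, py t) v <= y t * dotp (px, py t) (u t))
       /\ y t * dotp (px, py t) (u t) = h}.

(* (h) horizontal geodesic: the trajectory lies on lam * rot_{s90}(bd Om°)
   translated horizontally by c, and moves clockwise if s = 1 (rotation by
   +90), counterclockwise if s = -1 (rotation by -90), around (c,0). *)
Definition horizontal_geodesic (Om : set (R * R)) (T : R) (x y : R -> R)
    (u : R -> R * R) : Prop :=
  exists s : R, (s = 1 \/ s = -1) /\
  exists lam c : R, 0 < lam /\
    (forall t, `[0, T]%classic t -> exists w, bd (polar_set Om) w /\
        (x t - c, y t) = (lam * (rot90 s w).1, lam * (rot90 s w).2)) /\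
    {ae mu, forall t, `[0, T]%classic t ->
        s * cross (x t - c, y t) (y t * (u t).1, y t * (u t).2) < 0}.

Definition vertical_up_geodesic (Om : set (R * R)) (T : R) (x y : R -> R)
    (u : R -> R * R) : Prop :=
  exists m : R, (forall v, Om v -> v.2 <= m) /\
    {ae mu, forall t, `[0, T]%classic t -> (u t).2 = m} /\
    (forall t, `[0, T]%classic t ->
       y t = y 0 * expR (m * t) /\
       (x t)%:E = ((x 0)%:E + (y 0)%:E *
                   \int[mu]_(s in `[0%R, t]%classic) (expR (m * s) * (u s).1)%:E)%E).

Definition vertical_down_geodesic (Om : set (R * R)) (T : R) (x y : R -> R)
    (u : R -> R * R) : Prop :=
  exists m : R, (forall v, Om v -> m <= v.2) /\
    {ae mu, forall t, `[0, T]%classic t -> (u t).2 = m} /\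
    (forall t, `[0, T]%classic t ->
       y t = y 0 * expR (m * t) /\
       (x t)%:E = ((x 0)%:E + (y 0)%:E *
                   \int[mu]_(s in `[0%R, t]%classic) (expR (m * s) * (u s).1)%:E)%E).

End Defs.

(* Main.v *)
Require Import Defs.
From HB Require Import structures.
From mathcomp Require Import all_boot all_order all_algebra.
From mathcomp Require Import all_classical all_reals all_analysis.
From mathcomp Require Import measurable_realfun.
From mathcomp Require Import ring lra.
Set Implicit Arguments. Unset Strict Implicit. Unset Printing Implicit Defensive.
Import Order.TTheory GRing.Theory Num.Theory.
Import numFieldNormedType.Exports.
Local Open Scope classical_set_scope.
Local Open Scope ring_scope.

Section Gen.
Variable R : realType.
Local Notation mu := (@lebesgue_measure R).

Lemma G1 (D : set R) (f : R -> R) : measurable D -> mu.-integrable D (EFin \o f) ->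
  (\int[mu]_(x in D) (f x)%:E)%E = (Rintegral mu D f)%:E.
Proof. by move=> mD fi; rewrite /Rintegral fineK// integrable_fin_num. Qed.

Lemma G2 (T : R) (F f : R -> R) : mu.-integrable `[0, T] (EFin \o f) ->
  (forall t, `[0, T]%classic t -> F t = F 0 + \int[mu]_(s in `[0, t]) f s) ->
  forall a b, 0 <= a -> a <= b -> b <= T ->
  F b - F a = \int[mu]_(s in `]a, b]) f s.
Proof.
move=> fi HF a b a0 ab bT.
have aT : a <= T by apply: le_trans bT.
have b0 : 0 <= b by apply: le_trans ab.
rewrite (HF b) ?(HF a) /=; [|by rewrite in_itv /= a0 aT|by rewrite in_itv /= b0 bT].
rewrite opprD addrACA subrr add0r.
have := @Rintegral_itvB R f (BLeft 0) (BRight b) a.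
rewrite /=; apply.
- apply: integrableS fi => //; apply: subset_itvl; by rewrite bnd_simp.
- by rewrite bnd_simp.
- by rewrite bnd_simp.
Qed.


Lemma mu_oc (a b : R) : a <= b -> mu `]a, b]%classic = (b - a)%:E.
Proof.
move=> ab; rewrite lebesgue_measure_itv /= lte_fin.
have [ab'|] := ltP a b; first by rewrite EFinB.
move=> ba; have -> : b = a by apply/eqP; rewrite eq_le ab ba.
by rewrite subrr.
Qed.

Lemma G3 (a b C : R) (f : R -> R) : a <= b -> 0 <= C ->
  mu.-integrable `]a, b] (EFin \o f) ->
  (forall r, a < r -> r <= b -> `|f r| <= C) ->
  `|\int[mu]_(s in `]a, b]) f s| <= C * (b - a).
Proof.
move=> ab C0 fi fC.
apply: (le_trans (le_normr_Rintegral _ fi)) => //.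
have /integrableP[mf _] := fi.
have H : {ae mu, forall x, `]a, b]%classic x -> `|(EFin \o f) x| <= C%:E}%E.
  apply: aeW => x /=; rewrite in_itv /= => /andP[ax xb].
  by rewrite lee_fin fC.
have := integral_le_bound (mu:=mu) C%:E (measurable_itv _) mf.
rewrite lee_fin => /(_ C0 H).
set m := (X in (_ <= _ * X)%E -> _).
have -> : m = (b - a)%:E by exact: mu_oc ab.
rewrite -EFinM => h.
rewrite /Rintegral.
have -> : C * (b - a) = fine (C * (b - a))%:E by [].
apply: fine_le => //.
rewrite ge0_fin_numE; first exact: le_lt_trans h (ltry _).
by apply: integral_ge0 => x _; rewrite lee_fin.
Qed.

Lemma G4 (T : R) (F f : R -> R) : mu.-integrable `[0, T] (EFin \o f) ->
  (forall t, `[0, T]%classic t -> F t = F 0 + \int[mu]_(s in `[0, t]) f s) ->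
  exists M, 0 <= M /\ forall t, `[0, T]%classic t -> `|F t| <= M.
Proof.
move=> fi HF.
exists (`|F 0| + \int[mu]_(s in `[0, T]) `|f s|); split.
  by apply: addr_ge0 => //; apply: Rintegral_ge0.
move=> t tT; rewrite HF //.
apply: (le_trans (ler_normD _ _)); rewrite lerD2l.
move: tT; rewrite /= in_itv /= => /andP[t0 tT].
have fit : mu.-integrable `[0, t] (EFin \o f).
  by apply: integrableS fi => //; apply: subset_itvl; rewrite bnd_simp.
apply: (le_trans (le_normr_Rintegral _ fit)) => //.
have /integrableP[mf H2] := fi.
have H1 : (\int[mu]_(x in `[0%R, t]%classic) (`|f x|)%:E <= \int[mu]_(x in `[0%R, T]%classic) (`|f x|)%:E)%E.
  apply: ge0_subset_integral => //.
  - apply/measurable_EFinP; apply: measurableT_comp => //; exact/measurable_EFinP.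
  - by apply: subset_itvl; rewrite bnd_simp.
rewrite /Rintegral; apply: fine_le => //.
- rewrite ge0_fin_numE; last by apply: integral_ge0 => x _; rewrite lee_fin.
  exact: le_lt_trans H1 H2.
- rewrite ge0_fin_numE; last by apply: integral_ge0 => x _; rewrite lee_fin.
  exact: H2.
Qed.


Lemma lip_cont (a b K : R) (f : R -> R) :
  (forall s t, a <= s <= b -> a <= t <= b -> `|f s - f t| <= K * `|s - t|) ->
  {within `[a, b], continuous f}.
Proof.
move=> H; apply/subspace_continuousP => x xab.
apply/cvgrPdist_le => e e0.
rewrite near_withinE /=.
have K1 : 0 < `|K| + 1 by rewrite ltr_pwDr.
apply/nbhs_ballP; exists (e / (`|K| + 1)) => /=; first by rewrite divr_gt0.
move=> y /= xy yab.
move: xab yab; rewrite /= !in_itv /= => xab yab.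
apply: (le_trans (H x y xab yab)).
apply: (le_trans (ler_wpM2r _ (ler_norm K))) => //.
apply: (le_trans (ler_wpM2l _ (ltW xy))) => //.
by rewrite mulrA ler_pdivrMr // mulrC ler_wpM2l ?ltW // ltrDl.
Qed.

Lemma ToolD (a b s L K : R) (f : R -> R) : a < s -> s < b -> 0 <= K ->
  (forall t, a <= t -> t <= b -> `|f t - f s - L * (t - s)| <= K * (t - s) ^+ 2) ->
  is_derive s 1 f L.
Proof.
move=> as_ sb K0 H.
have Hc : (fun h => h^-1 *: ((f \o shift s) (h *: 1) - f s)) @ 0^' --> L.
  apply/cvgrPdist_le => e e0.
  rewrite near_withinE /=.
  have K1 : 0 < K + 1 by rewrite ltr_pwDr.
  apply/nbhs_ballP.
  exists (Num.min (Num.min (s - a) (b - s)) (e / (K + 1))) => /=.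
    by rewrite !lt_min !subr_gt0 as_ sb divr_gt0.
  move=> h; rewrite /ball /= sub0r normrN !lt_min => /andP[/andP[hsa hbs] he] h0.
  have -> : h%:A = h by rewrite /GRing.scale /= mulr1.
  rewrite /GRing.scale /=.
  have h1 := ler_norm h; have h2 : - h <= `|h| by rewrite -normrN ler_norm.
  have ht1 : a <= h + s by lra.
  have ht2 : h + s <= b by lra.
  have := H _ ht1 ht2; rewrite addrK.
  have hn0 : `|h| != 0 by rewrite normr_eq0.
  have -> : L - h^-1 * (f (h + s) - f s) = - h^-1 * (f (h + s) - f s - L * h).
    by field.
  move=> Hb; rewrite normrM normrN normfV.
  rewrite ler_pdivrMl ?normr_gt0 //.
  apply: (le_trans Hb).
  rewrite -real_normK ?num_real //.
  move: he; rewrite ltr_pdivlMr // => he.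
  have n0 := normr_ge0 h.
  set n := `|h| in he n0 *.
  nra.
split; first by apply/cvg_ex; exists L.
exact: cvg_lim.
Qed.


Lemma G7 (Om : set (R * R)) : compact Om ->
  exists M, 0 < M /\ forall v, Om v -> `|v.1| <= M /\ `|v.2| <= M.
Proof.
move=> /compact_bounded [M [Mreal HM]].
have H := HM (`|M| + 1).
have : M < `|M| + 1 by apply: le_lt_trans (real_ler_norm Mreal) _; rewrite ltrDl.
move=> /H {}H.
exists (`|M| + 1); split; first by rewrite ltr_pwDr.
move=> v /H /=; rewrite prod_normE /= ge_max => /andP[-> ->] //.
Qed.

Lemma G9 (Om : set (R * R)) : interior Om (0, 0) ->
  exists r, 0 < r /\ forall v : R * R, `|v.1| < r -> `|v.2| < r -> Om v.
Proof.
move=> /nbhs_ballP [e /= e0 He].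
exists e; split => // v h1 h2; apply: He.
by split; rewrite /ball /= sub0r normrN.
Qed.


Lemma G8 (T : R) (P : R -> Prop) : 0 < T ->
  {ae mu, forall t, `[0, T]%classic t -> P t} ->
  forall t, 0 <= t -> t <= T -> forall d, 0 < d ->
  exists t', [/\ 0 <= t', t' <= T, `|t' - t| < d & P t'].
Proof.
move=> T0 [N [mN N0 HN]] t t0 tT d d0.
case: (pselect (exists t', [/\ 0 <= t', t' <= T, `|t' - t| < d & P t'])) => // nE.
exfalso.
set a := Num.max 0 (t - d).
set b := Num.min T (t + d).
have ab : a < b.
  rewrite /a /b gt_max !lt_min.
  by apply/andP; split; apply/andP; split; lra.
have IN : `]a, b[%classic `<=` N.
  move=> r /=; rewrite in_itv /= => /andP[ar rb].
  apply: HN => /= Qr; apply: nE; exists r.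
  move: ar rb; rewrite /a /b gt_max lt_min => /andP[r0 rtd'] /andP[rT rtd].
  have rt : `|r - t| < d.
    rewrite ltr_norml; apply/andP; split; lra.
  split => //; first exact: ltW.
  exact: ltW.
  by apply: Qr; rewrite /= in_itv /= (ltW r0) (ltW rT).
have := le_measure mu (mem_set (measurable_itv `]a, b[)) (mem_set mN) IN.
set m1 := (X in (X <= _)%E -> _); set m2 := (X in (_ <= X)%E -> _).
have -> : m2 = 0%E by exact: N0.
have -> : m1 = (b - a)%:E.
  rewrite /m1; have := (@lebesgue_measure_itv R `]a, b[); rewrite /= lte_fin ab -EFinD.
  by [].
rewrite lee_fin; lra.
Qed.


Lemma G10 (T : R) (F f : R -> R) : mu.-integrable `[0, T] (EFin \o f) ->
  (forall t, `[0, T]%classic t ->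
     (F t)%:E = ((F 0)%:E + \int[mu]_(s in `[0%R, t]%classic) (f s)%:E)%E) ->
  (forall t, `[0, T]%classic t -> F t = F 0 + \int[mu]_(s in `[0, t]) f s).
Proof.
move=> fi HF t tT; have := HF t tT.
move: tT; rewrite /= in_itv /= => /andP[t0 tT].
have fit : mu.-integrable `[0, t] (EFin \o f).
  by apply: integrableS fi => //; apply: subset_itvl; rewrite bnd_simp.
rewrite (G1 _ fit) // -EFinD.
by case.
Qed.

Lemma G10N (T : R) (F f : R -> R) : mu.-integrable `[0, T] (EFin \o f) ->
  (forall t, `[0, T]%classic t ->
     (F t)%:E = ((F 0)%:E - \int[mu]_(s in `[0%R, t]%classic) (f s)%:E)%E) ->
  (forall t, `[0, T]%classic t -> - F t = - F 0 + \int[mu]_(s in `[0, t]) f s).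
Proof.
move=> fi HF t tT; have := HF t tT.
move: tT; rewrite /= in_itv /= => /andP[t0 tT].
have fit : mu.-integrable `[0, t] (EFin \o f).
  by apply: integrableS fi => //; apply: subset_itvl; rewrite bnd_simp.
rewrite (G1 _ fit) // -EFinB.
case=> ->; by rewrite opprB addrC.
Qed.

Lemma G11 (T C : R) (F f : R -> R) : mu.-integrable `[0, T] (EFin \o f) ->
  (forall t, `[0, T]%classic t -> F t = F 0 + \int[mu]_(s in `[0, t]) f s) ->
  0 <= C -> (forall t, 0 <= t -> t <= T -> `|f t| <= C) ->
  forall a b, 0 <= a -> a <= T -> 0 <= b -> b <= T -> `|F a - F b| <= C * `|a - b|.
Proof.
move=> fi HF C0 fC.
have H : forall a b, 0 <= a -> a <= b -> b <= T -> `|F b - F a| <= C * `|b - a|.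
  move=> a b a0 ab bT.
  rewrite (G2 fi HF a0 ab bT) (ger0_norm (_ : 0 <= b - a)); last by rewrite subr_ge0.
  apply: G3 => //.
    apply: integrableS fi => // r /=; rewrite !in_itv /= => /andP[h1 h2].
    by apply/andP; split; lra.
  move=> r ar rb; apply: fC; lra.
move=> a b a0 aT b0 bT.
case: (leP a b) => ab.
  by rewrite distrC (distrC a); apply: H.
by apply: H => //; apply: ltW.
Qed.


Lemma cst_int (a b c : R) : mu.-integrable `]a, b] (EFin \o cst c).
Proof.
apply: (@integrableS _ _ _ mu `[a, b]) => //; first exact: subset_itv_oc_cc.
apply: continuous_compact_integrable; first exact: segment_compact.
by apply: continuous_subspaceT => x; exact: cst_continuous.
Qed.

Lemma G3c (a b C c : R) (f : R -> R) : a <= b -> 0 <= C ->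
  mu.-integrable `]a, b] (EFin \o f) ->
  (forall r, a < r -> r <= b -> `|f r - c| <= C) ->
  `|\int[mu]_(s in `]a, b]) f s - c * (b - a)| <= C * (b - a).
Proof.
move=> ab C0 fi fC.
have -> : c * (b - a) = \int[mu]_(s in `]a, b]) cst c s.
  rewrite Rintegral_cst // /=.
  by have := mu_oc ab; rewrite /= => ->.
rewrite -RintegralB //; last exact: cst_int.
apply: G3 => //.
exact: integrableB fi (cst_int a b c).
Qed.

Lemma within_contM (A : set R) (f g : R -> R) :
  {within A, continuous f} -> continuous g ->
  {within A, continuous (fun t => f t * g t)}.
Proof.
move=> fc gc; apply/subspace_continuousP => x Ax.
apply: cvgM.
  by move/subspace_continuousP : fc; apply.
by apply: cvg_within_filter; exact: gc.
Qed.

Lemma dE (k z : R) : is_derive z 1 (fun t : R => expR (k * t)) (expR (k * z) * k).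
Proof.
have h1 := is_deriveZ k (is_derive_id z (1:R)).
have h2 := @is_derive1_comp R expR (k \*: id) z _ _ (is_derive_expR _) h1.
have -> : (fun t : R => expR (k * t)) = expR \o (k \*: id) by [].
apply: is_derive_eq h2 _.
by rewrite /= /GRing.scale /= mulr1.
Qed.

Lemma contE (k : R) : continuous (fun t : R => expR (k * t)).
Proof.
move=> z; apply: continuous_comp; [exact: mulrl_continuous | exact: continuous_expR].
Qed.


Lemma Vert (T m Mo : R) (x y : R -> R) (u : R -> R * R) :
  0 < T -> 0 <= Mo ->
  (forall t, `[0, T]%classic t -> `|(u t).2| <= Mo) ->
  mu.-integrable `[0, T] (fun s => (y s * (u s).1)%:E) ->
  mu.-integrable `[0, T] (fun s => (y s * (u s).2)%:E) ->
  (forall t, `[0, T]%classic t ->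
     (x t)%:E = ((x 0)%:E + \int[mu]_(s in `[0%R, t]%classic) (y s * (u s).1)%:E)%E) ->
  (forall t, `[0, T]%classic t ->
     (y t)%:E = ((y 0)%:E + \int[mu]_(s in `[0%R, t]%classic) (y s * (u s).2)%:E)%E) ->
  (forall t, `[0, T]%classic t -> 0 < y t) ->
  {ae mu, forall t, `[0, T]%classic t -> (u t).2 = m} ->
  forall t, `[0, T]%classic t ->
       y t = y 0 * expR (m * t) /\
       (x t)%:E = ((x 0)%:E + (y 0)%:E *
                   \int[mu]_(s in `[0%R, t]%classic) (expR (m * s) * (u s).1)%:E)%E.
Proof.
move=> T0 Mo0 uB ix iy Hx Hy ypos Hae.
pose f2 := fun s => y s * (u s).2.
have iy' : mu.-integrable `[0, T] (EFin \o f2) by [].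
have HY := G10 iy' Hy.
have [My [My0 HMy]] := G4 iy' HY.
have Ly0 : 0 <= My * Mo by apply: mulr_ge0.
have f2B : forall t, 0 <= t -> t <= T -> `|f2 t| <= My * Mo.
  move=> t t0 tT; have tI : `[0, T]%classic t by rewrite /= in_itv /= t0 tT.
  by rewrite /f2 normrM ler_pM // ?HMy // uB.
have Lip := G11 iy' HY Ly0 f2B.
set Ly := My * Mo in Ly0 f2B Lip.
have yc : forall a, 0 <= a -> a <= T -> {within `[0, a], continuous y}.
  move=> a a0 aT; apply: (@lip_cont 0 a Ly) => s1 s2 /andP[h1 h2] /andP[h3 h4].
  by apply: Lip => //; lra.
have myc : {within `[0, T], continuous (fun s => m * y s)}.
  apply: (@lip_cont 0 T (`|m| * Ly)) => s1 s2 /andP[h1 h2] /andP[h3 h4].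
  rewrite -mulrBr normrM -mulrA ler_wpM2l //.
  by apply: Lip.
have imy : mu.-integrable `[0, T] (EFin \o (fun s => m * y s)).
  by apply: continuous_compact_integrable => //; exact: segment_compact.
have HY2 : forall t, `[0, T]%classic t ->
    y t = y 0 + \int[mu]_(s in `[0, t]) (m * y s).
  move=> t tT; rewrite HY //; congr (_ + _).
  move: tT; rewrite /= in_itv /= => /andP[t0 tT].
  have sub : `[0, t]%classic `<=` `[0, T]%classic.
    by apply: subset_itvl; rewrite bnd_simp.
  rewrite /Rintegral; congr fine.
  apply: ae_eq_integral => //.
  - have : mu.-integrable `[0, t] (EFin \o f2) by apply: integrableS iy'.
    by move/measurable_int.
  - have : mu.-integrable `[0, t] (EFin \o (fun s => m * y s)) by apply: integrableS imy.
    by move/measurable_int.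
  - apply: (@filterS _ _ (ae_filter_ringOfSetsType mu) _ _ _ Hae) => r Hr rI.
    by rewrite /f2 /= Hr; [congr EFin; exact: mulrC | exact: sub rI].
have key : forall a b w, 0 <= a -> a <= b -> b <= T -> a <= w -> w <= b ->
    `|y b - y a - m * y w * (b - a)| <= `|m| * Ly * (b - a) ^+ 2.
  move=> a b w a0 ab bT aw wb.
  rewrite (G2 imy HY2 a0 ab bT) expr2 mulrA.
  apply: G3c => //.
  - by apply: mulr_ge0; [apply: mulr_ge0|lra].
  - apply: integrableS imy => // r /=; rewrite !in_itv /= => /andP[h1 h2].
    by apply/andP; split; lra.
  - move=> r ar rb; rewrite -mulrBr normrM -mulrA ler_wpM2l //.
    apply: (le_trans (Lip _ _ _ _ _ _)); try lra.
    rewrite ler_wpM2l //.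
    rewrite ler_norml; apply/andP; split; lra.
have dy : forall z, 0 < z -> z < T -> is_derive z 1 y (m * y z).
  move=> z z0 zT; apply: (@ToolD 0 T z _ (`|m| * Ly)) => //.
    by apply: mulr_ge0.
  move=> t t0 tT; case: (leP z t) => zt.
    by apply: key => //; lra.
  have := key t z z t0 (ltW zt) (ltW zT) (ltW zt) (lexx _).
  have -> : y z - y t - m * y z * (z - t) = - (y t - y z - m * y z * (t - z)) by ring.
  by rewrite normrN; have -> : (z - t) ^+ 2 = (t - z) ^+ 2 by ring.
have Zc : forall t, 0 <= t -> t <= T -> y t * expR (- m * t) = y 0.
  move=> t t0 tT.
  case: (eqVneq t 0) => [->|tn0]; first by rewrite mulr0 expR0 mulr1.
  have tp : 0 < t by rewrite lt_neqAle eq_sym tn0 t0.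
  have := @MVT R (fun s => y s * expR (- m * s)) (fun _ => 0) 0 t tp.
  case.
  - move=> z; rewrite in_itv /= => /andP[z0 zt].
    have := is_deriveM (dy z z0 (lt_le_trans zt tT)) (dE (- m) z).
    move=> H; apply: is_derive_eq H _.
    by rewrite /GRing.scale /=; ring.
  - by apply: within_contM; [exact: yc | exact: contE].
  move=> c _; rewrite mul0r mulr0 expR0 mulr1.
  by move/eqP; rewrite subr_eq0 => /eqP.
move=> t tT.
have [t0 tT'] : 0 <= t /\ t <= T by move: tT; rewrite /= in_itv /= => /andP.
have yform : forall s, 0 <= s -> s <= T -> y s = y 0 * expR (m * s).
  move=> s s0 sT; rewrite -(Zc s s0 sT) -mulrA -expRD.
  have -> : - m * s + m * s = 0 by ring.
  by rewrite expR0 mulr1.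
split; first exact: yform.
rewrite Hx //; congr (_ + _)%E.
have y0p : 0 < y 0 by apply: ypos; rewrite /= in_itv /= lexx ltW.
have ixt : mu.-integrable `[0, t] (fun s => (y s * (u s).1)%:E).
  by apply: integrableS ix => //; apply: subset_itvl; rewrite bnd_simp.
transitivity ((y 0)%:E * ((y 0)^-1%:E * \int[mu]_(s in `[0%R, t]%classic) (y s * (u s).1)%:E))%E.
  by rewrite muleA -EFinM mulfV ?gt_eqF // mul1e.
congr (_ * _)%E.
rewrite -integralZl //.
apply: eq_integral => s; rewrite inE /= in_itv /= => /andP[s0 st].
rewrite -EFinM (yform s) //; last by lra.
by congr EFin; rewrite mulrA mulrA mulVf ?gt_eqF // mul1r.
Qed.


Lemma G12 (T K : R) (F : R -> R) : 0 <= K ->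
  (forall a b, 0 <= a -> a <= T -> 0 <= b -> b <= T -> `|F a - F b| <= K * `|a - b|) ->
  (forall t, 0 <= t -> t <= T -> F t <> 0) -> 0 < F 0 ->
  forall t, 0 <= t -> t <= T -> 0 < F t.
Proof.
move=> K0 L nz F0 t t0 tT; rewrite ltNge; apply/negP => Ft.
have cF : {within `[0, t], continuous F}.
  apply: (@lip_cont 0 t K) => s1 s2 /andP[h1 h2] /andP[h3 h4].
  by apply: L => //; lra.
have := @IVT R F 0 t 0 t0 cF.
rewrite ge_min le_max Ft (ltW F0) orbT /= => /(_ isT) [c].
rewrite in_itv /= => /andP[c0 ct] Fc.
by apply: (nz c) => //; lra.
Qed.

Lemma small (L c z : R) : 0 <= L -> 0 < c -> 0 <= z -> z < c / (L + 1) -> L * z < c.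
Proof.
move=> L0 c0 z0; rewrite ltr_pdivlMr; last by lra.
nra.
Qed.

Lemma intZ (a b k : R) (f : R -> R) :
  mu.-integrable `]a, b] (EFin \o f) -> mu.-integrable `]a, b] (EFin \o (fun r => k * f r)).
Proof.
move=> fi; have := integrableZl _ k fi; apply => //.
Qed.

Lemma intD (a b : R) (f g : R -> R) :
  mu.-integrable `]a, b] (EFin \o f) -> mu.-integrable `]a, b] (EFin \o g) ->
  mu.-integrable `]a, b] (EFin \o (fun r => f r + g r)).
Proof.
move=> fi gi; have := integrableD _ fi gi; apply => //.
Qed.

Lemma intB (a b : R) (f g : R -> R) :
  mu.-integrable `]a, b] (EFin \o f) -> mu.-integrable `]a, b] (EFin \o g) ->
  mu.-integrable `]a, b] (EFin \o (fun r => f r - g r)).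
Proof.
move=> fi gi; have := integrableB _ fi gi; apply => //.
Qed.

Lemma intsub (T a b : R) (f : R -> R) : 0 <= a -> b <= T ->
  mu.-integrable `[0, T] (EFin \o f) -> mu.-integrable `]a, b] (EFin \o f).
Proof.
move=> a0 bT fi; apply: integrableS fi => // r /=; rewrite !in_itv /= => /andP[h1 h2].
by apply/andP; split; lra.
Qed.

End Gen.

Theorem theorem1 (R : realType) (Om : set (R * R)) :
  convex2 Om -> compact Om -> interior Om (0, 0) ->
  forall (T : R) (x y : R -> R) (u : R -> R * R) (px : R) (py : R -> R),
    pmp_extremal Om T x y u px py ->
    horizontal_geodesic Om T x y u \/
    vertical_up_geodesic Om T x y u \/
    vertical_down_geodesic Om T x y u.
Proof.
move=> _ cOm iOm T x y u px py.
move=> [T0 [ypos [uOm [[mu1 mu2] [[iy1 [iy2 ig]] [Hx [Hy [Hpy [pne [h [h0 Hae]]]]]]]]]]].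
have [Mo [Mo0 HMo]] := G7 cOm.
have [r [r0 Hr]] := G9 iOm.
pose f1 := fun s => y s * (u s).1.
pose f2 := fun s => y s * (u s).2.
pose g := fun s => px * (u s).1 + py s * (u s).2.
have iy1' : lebesgue_measure.-integrable `[0, T] (EFin \o f1) by [].
have iy2' : lebesgue_measure.-integrable `[0, T] (EFin \o f2) by [].
have ig' : lebesgue_measure.-integrable `[0, T] (EFin \o g) by [].
have HX := G10 iy1' Hx.
have HY := G10 iy2' Hy.
have HP := G10N ig' Hpy.
have [My [My0 HMy]] := G4 iy2' HY.
have [Mp [Mp0 HMp']] := G4 ig' HP.
have inI : forall t, 0 <= t -> t <= T -> `[0, T]%classic t.
  by move=> t t0 tT; rewrite /= in_itv /= t0 tT.
have HMp : forall t, 0 <= t -> t <= T -> `|py t| <= Mp.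
  by move=> t t0 tT; rewrite -normrN; apply: HMp'; apply: inI.
have uB1 : forall t, 0 <= t -> t <= T -> `|(u t).1| <= Mo.
  by move=> t t0 tT; have [] := HMo _ (uOm t (inI t t0 tT)).
have uB2 : forall t, 0 <= t -> t <= T -> `|(u t).2| <= Mo.
  by move=> t t0 tT; have [] := HMo _ (uOm t (inI t t0 tT)).
have Ly0 : 0 <= My * Mo by apply: mulr_ge0 => //; exact: ltW.
have f1B : forall t, 0 <= t -> t <= T -> `|f1 t| <= My * Mo.
  by move=> t t0 tT; rewrite /f1 normrM ler_pM // ?HMy ?uB1 //; apply: inI.
have f2B : forall t, 0 <= t -> t <= T -> `|f2 t| <= My * Mo.
  by move=> t t0 tT; rewrite /f2 normrM ler_pM // ?HMy ?uB2 //; apply: inI.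
have Lg0 : 0 <= `|px| * Mo + Mp * Mo by apply: addr_ge0; apply: mulr_ge0 => //; exact: ltW.
have gB : forall t, 0 <= t -> t <= T -> `|g t| <= `|px| * Mo + Mp * Mo.
  move=> t t0 tT; rewrite /g; apply: (le_trans (ler_normD _ _)).
  by apply: lerD; rewrite normrM ler_pM // ?uB1 ?uB2 ?HMp.
have LipX := G11 iy1' HX Ly0 f1B.
have LipY := G11 iy2' HY Ly0 f2B.
have LipP' := G11 ig' HP Lg0 gB.
set Ly := My * Mo in Ly0 f1B f2B LipX LipY.
set Lg := `|px| * Mo + Mp * Mo in Lg0 gB LipP'.
have LipP : forall a b, 0 <= a -> a <= T -> 0 <= b -> b <= T ->
    `|py a - py b| <= Lg * `|a - b|.
  move=> a b a0 aT b0 bT; have := LipP' a b a0 aT b0 bT.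
  have -> : - py a - - py b = - (py a - py b) by ring.
  by rewrite normrN.
pose Good t := (forall v, Om v -> y t * dotp (px, py t) v <= y t * dotp (px, py t) (u t))
   /\ y t * dotp (px, py t) (u t) = h.
have dens := G8 T0 Hae.
have [t0 [t00 t0T _ [G0a G0b]]] := dens 0 (lexx _) (ltW T0) 1 ltr01.
have t0I := inI t0 t00 t0T.
have hp : 0 < h.
  have yp := ypos t0 t0I.
  have pn := pne t0 t0I.
  have ab2 : 0 < px ^+ 2 + py t0 ^+ 2.
    rewrite lt_neqAle addr_ge0 ?sqr_ge0 // andbT eq_sym; apply/negP => /eqP.
    move/eqP; rewrite paddr_eq0 ?sqr_ge0 // !sqrf_eq0 => /andP[/eqP a0 /eqP b0].
    by apply: pn; rewrite a0 b0.
  have den : 0 < `|px| + `|py t0| + 1.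
    by have := normr_ge0 px; have := normr_ge0 (py t0); lra.
  pose k := r / (`|px| + `|py t0| + 1).
  have kp : 0 < k by rewrite /k divr_gt0.
  have kb : forall z, `|z| <= `|px| + `|py t0| -> `|k * z| < r.
    move=> z hz; rewrite normrM (gtr0_norm kp) /k mulrAC ltr_pdivrMr //.
    by rewrite ltr_pM2l //; lra.
  have Omv : Om (k * px, k * py t0).
    apply: Hr => /=; apply: kb.
      by have := normr_ge0 (py t0); lra.
    by have := normr_ge0 px; lra.
  have := G0a _ Omv; rewrite G0b /dotp /=.
  have : 0 < y t0 * (px * (k * px) + py t0 * (k * py t0)).
    apply: mulr_gt0 => //.
    have -> : px * (k * px) + py t0 * (k * py t0) = k * (px ^+ 2 + py t0 ^+ 2) by ring.
    exact: mulr_gt0.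
  lra.
have uB2' : forall t, `[0, T]%classic t -> `|(u t).2| <= Mo.
  by move=> t /=; rewrite in_itv /= => /andP[? ?]; apply: uB2.
have tI2 : forall t, `[0, T]%classic t -> 0 <= t /\ t <= T.
  by move=> t /=; rewrite in_itv /= => /andP.
case: (eqVneq px 0) => [px0|pxn0].
  right.
  have pyn : forall t, 0 <= t -> t <= T -> py t <> 0.
    by move=> t ta tb E; apply: (pne t (inI t ta tb)); rewrite px0 E.
  have dotE : forall t v, y t * dotp (px, py t) v = (y t * py t) * v.2.
    by move=> t v; rewrite /dotp px0 /=; ring.
  case: (ltP 0 (py 0)) => py0.
    left.
    have pyp := G12 Lg0 LipP pyn py0.
    have ypp : forall t, `[0, T]%classic t -> 0 < y t * py t.
      move=> t tI; have [ta tb] := tI2 t tI.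
      by apply: mulr_gt0; [apply: ypos|apply: pyp].
    have mmax : forall v, Om v -> v.2 <= (u t0).2.
      by move=> v Ov; have := G0a v Ov; rewrite !dotE ler_pM2l // ypp.
    have Hae' : {ae lebesgue_measure, forall t, `[0, T]%classic t -> (u t).2 = (u t0).2}.
      apply: (@filterS _ _ (ae_filter_ringOfSetsType _) _ _ _ Hae) => t Ht tI.
      have [Ga _] := Ht tI.
      apply/eqP; rewrite eq_le (mmax _ (uOm t tI)) /=.
      by have := Ga _ (uOm t0 t0I); rewrite !dotE ler_pM2l // ypp.
    rewrite /vertical_up_geodesic; exists (u t0).2; split => //; split => //.
    exact: (Vert T0 (ltW Mo0) uB2' iy1 iy2 Hx Hy ypos Hae').
  right.
  have py0' : 0 < - py 0.
    by rewrite oppr_gt0 lt_neqAle py0 andbT; apply/eqP; apply: pyn => //; exact: ltW.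
  have pyn' : forall t, 0 <= t -> t <= T -> - py t <> 0.
    by move=> t ta tb /eqP; rewrite oppr_eq0 => /eqP; apply: pyn.
  have pyp := G12 Lg0 LipP' pyn' py0'.
  have ypp : forall t, `[0, T]%classic t -> y t * py t < 0.
    move=> t tI; have [ta tb] := tI2 t tI.
    by rewrite pmulr_rlt0 ?ypos // -oppr_gt0; apply: pyp.
  have mmin : forall v, Om v -> (u t0).2 <= v.2.
    by move=> v Ov; have := G0a v Ov; rewrite !dotE ler_nM2l // ypp.
  have Hae' : {ae lebesgue_measure, forall t, `[0, T]%classic t -> (u t).2 = (u t0).2}.
    apply: (@filterS _ _ (ae_filter_ringOfSetsType _) _ _ _ Hae) => t Ht tI.
    have [Ga _] := Ht tI.
    apply/eqP; rewrite eq_le (mmin _ (uOm t tI)) andbT.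
    by have := Ga _ (uOm t0 t0I); rewrite !dotE ler_nM2l // ypp.
  rewrite /vertical_down_geodesic; exists (u t0).2; split => //; split => //.
  exact: (Vert T0 (ltW Mo0) uB2' iy1 iy2 Hx Hy ypos Hae').
left.
have [s [hs1 hs2]] : exists s : R, (s = 1 \/ s = -1) /\ s * px = `|px|.
  case: (ltP 0 px) => p0.
    by exists 1; split; [left | rewrite mul1r gtr0_norm].
  by exists (-1); split; [right | rewrite mulN1r ler0_norm].
have apx : 0 < `|px| by rewrite normr_gt0.
pose Q t := px * x t + y t * py t.
have KQ0 : 0 <= Ly * Lg + Lg * Ly by apply: addr_ge0; apply: mulr_ge0.
have QB : forall a b, 0 <= a -> a <= b -> b <= T ->
    `|Q b - Q a| <= (Ly * Lg + Lg * Ly) * (b - a) ^+ 2.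
  move=> a b a0 ab bT.
  have aT : a <= T by apply: le_trans bT.
  have b0 : 0 <= b by apply: le_trans ab.
  have ex := G2 iy1' HX a0 ab bT.
  have ey := G2 iy2' HY a0 ab bT.
  have ep := G2 ig' HP a0 ab bT.
  have -> : Q b - Q a = px * (x b - x a) + py b * (y b - y a) - y a * (- py b - - py a).
    by rewrite /Q; ring.
  rewrite ex ey ep.
  have i1 := intsub a0 bT iy1'.
  have i2 := intsub a0 bT iy2'.
  have i3 := intsub a0 bT ig'.
  rewrite -!RintegralZl // -RintegralD //; try exact: intZ.
  rewrite -RintegralB //; last exact: intZ.
    2: by apply: intD; exact: intZ.
  rewrite expr2 mulrA.
  apply: G3 => //.
    by apply: mulr_ge0; rewrite // subr_ge0.
    by apply: intB; [apply: intD|]; exact: intZ.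
  move=> z ar rb.
  have -> : px * f1 z + py b * f2 z - y a * g z = (y z - y a) * g z + (py b - py z) * f2 z.
    by rewrite /f1 /f2 /g; ring.
  have z0 : 0 <= z by apply: le_trans (ltW ar).
  have zT : z <= T by apply: le_trans bT.
  apply: (le_trans (ler_normD _ _)).
  rewrite (normrM (y z - y a)) (normrM (py b - py z)) mulrDl.
  apply: lerD.
    rewrite mulrAC.
    apply: ler_pM => //.
      apply: (le_trans (LipY z a z0 zT a0 aT)).
      by rewrite ler_wpM2l // ger0_norm ?subr_ge0 ?(ltW ar) // lerD2r.
    exact: gB.
  rewrite mulrAC.
  apply: ler_pM => //.
    apply: (le_trans (LipP b z b0 bT z0 zT)).
    by rewrite ler_wpM2l // ger0_norm ?subr_ge0 // lerD2l lerN2 ltW.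
  exact: f2B.
set KQ := Ly * Lg + Lg * Ly in KQ0 QB.
have QB2 : forall a b, 0 <= a -> a <= T -> 0 <= b -> b <= T ->
    `|Q a - Q b| <= KQ * (a - b) ^+ 2.
  move=> a b a0 aT b0 bT; case: (leP a b) => ab.
    rewrite distrC; have -> : (a - b) ^+ 2 = (b - a) ^+ 2 by ring.
    exact: QB.
  exact: QB (ltW ab) aT.
have Qconst : forall t, 0 <= t -> t <= T -> Q t = Q 0.
  move=> t ta tT.
  case: (eqVneq t 0) => [->//|tn0].
  have tp : 0 < t by rewrite lt_neqAle eq_sym tn0 ta.
  have := @MVT R Q (fun _ => 0) 0 t tp.
  case.
  - move=> z; rewrite in_itv /= => /andP[z0 zt].
    have zT : z < T by apply: lt_le_trans tT.
    apply: (@ToolD R 0 T z 0 KQ) => // w w0 wT.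
    rewrite mul0r subr0; apply: QB2 => //; exact: ltW.
  - apply: (@lip_cont R 0 t (KQ * T)) => s1 s2 /andP[h1 h2] /andP[h3 h4].
    have s1T : s1 <= T by apply: le_trans tT.
    have s2T : s2 <= T by apply: le_trans tT.
    apply: (le_trans (QB2 s1 s2 h1 s1T h3 s2T)).
    rewrite -mulrA ler_wpM2l // -real_normK ?num_real // expr2 ler_wpM2r //.
    by rewrite ler_norml; apply/andP; split; clear -h1 h2 h3 h4 tT; lra.
  by move=> c _; rewrite mul0r => /eqP; rewrite subr_eq0 => /eqP.
pose c := x 0 + y 0 * py 0 / px.
have KI : forall t, 0 <= t -> t <= T -> x t - c = - (y t * py t / px).
  move=> t ta tT; have := Qconst t ta tT; rewrite /Q => E.
  have -> : x t = (px * x 0 + y 0 * py 0 - y t * py t) / px.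
    by rewrite -E; field.
  by rewrite /c; field.
pose phi (v : R * R) t := y t * (px * v.1 + py t * v.2).
pose Lph := `|px| * Mo * Ly + Mo * (My * Lg + Mp * Ly).
have Lph0 : 0 <= Lph.
  rewrite /Lph; apply: addr_ge0.
    apply: mulr_ge0 => //; apply: mulr_ge0 => //; exact: ltW.
  apply: mulr_ge0; first exact: ltW.
  by apply: addr_ge0; apply: mulr_ge0.
have LipPhi : forall v, Om v -> forall a b, 0 <= a -> a <= T -> 0 <= b -> b <= T ->
    `|phi v a - phi v b| <= Lph * `|a - b|.
  move=> v Ov a b a0 aT b0 bT.
  have [v1 v2] := HMo v Ov.
  have A1 := LipY a b a0 aT b0 bT.
  have A2 := LipP a b a0 aT b0 bT.
  have A3 := HMy a (inI a a0 aT).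
  have A4 := HMp b b0 bT.
  set d := `|a - b| in A1 A2 *.
  have -> : phi v a - phi v b = px * v.1 * (y a - y b) +
      v.2 * (y a * (py a - py b) + py b * (y a - y b)) by rewrite /phi; ring.
  have T1 : `|px * v.1 * (y a - y b)| <= `|px| * Mo * (Ly * d).
    rewrite !normrM; apply: ler_pM => //.
    by rewrite ler_wpM2l.
  have T2 : `|v.2 * (y a * (py a - py b) + py b * (y a - y b))| <=
      Mo * (My * (Lg * d) + Mp * (Ly * d)).
    rewrite normrM; apply: ler_pM => //.
    apply: (le_trans (ler_normD _ _)); rewrite !normrM.
    by apply: lerD; apply: ler_pM.
  apply: (le_trans (ler_normD _ _)); apply: (le_trans (lerD T1 T2)).
  by rewrite le_eqVlt; apply/orP; left; apply/eqP; rewrite /Lph; ring.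
have Pol : forall t, 0 <= t -> t <= T -> forall v, Om v -> phi v t <= h.
  move=> t ta tb v Ov; rewrite leNgt; apply/negP => hv.
  have c0 : 0 < phi v t - h by rewrite subr_gt0.
  have dp : 0 < (phi v t - h) / (Lph + 1) by rewrite divr_gt0 //; clear -Lph0; lra.
  have [tau [tau0 tauT taut [Ga Gb]]] := dens t ta tb _ dp.
  have h1 : phi v tau <= h by rewrite -Gb; exact: Ga v Ov.
  have h2 := LipPhi v Ov t tau ta tb tau0 tauT.
  have h3 := small Lph0 c0 (normr_ge0 _) taut.
  rewrite (distrC tau t) in h3.
  have := ler_norm (phi v t - phi v tau).
  move=> h4; clear -hv h1 h2 h3 h4; lra.
have NotInt : forall t, 0 <= t -> t <= T ->
    ~ interior (polar_set Om) (y t * px / h, y t * py t / h).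
  move=> t ta tb /nbhs_ballP [e /= e0 He].
  set w1 := y t * px / h; set w2 := y t * py t / h.
  have den : 0 < `|w1| + `|w2| + 1.
    by have := normr_ge0 w1; have := normr_ge0 w2; clear; lra.
  pose k := e / (`|w1| + `|w2| + 1).
  have kp : 0 < k by rewrite /k divr_gt0.
  have kb : forall z, `|z| <= `|w1| + `|w2| -> `|k * z| < e.
    move=> z hz; rewrite normrM (gtr0_norm kp) /k mulrAC ltr_pdivrMr //.
    by rewrite ltr_pM2l //; clear -hz; lra.
  have Pw : polar_set Om ((1 + k) * w1, (1 + k) * w2).
    apply: He; split; rewrite /ball /=.
      have -> : w1 - (1 + k) * w1 = - (k * w1) by ring.
      by rewrite normrN; apply: kb; have := normr_ge0 w2; clear; lra.
    have -> : w2 - (1 + k) * w2 = - (k * w2) by ring.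
    by rewrite normrN; apply: kb; have := normr_ge0 w1; clear; lra.
  have k1 : 0 < 1 + k by clear -kp; lra.
  pose q := h / (1 + k).
  have qh : q < h by rewrite /q ltr_pdivrMr //; clear -hp kp; nra.
  have Bq : forall v, Om v -> phi v t <= q.
    move=> v Ov; have := Pw v Ov; rewrite /dotp /=.
    have -> : (1 + k) * w1 * v.1 + (1 + k) * w2 * v.2 = (1 + k) * phi v t / h.
      by rewrite /w1 /w2 /phi; field; apply/eqP; clear -hp; lra.
    rewrite /q ler_pdivlMr // ler_pdivrMr // mul1r mulrC; exact.
  have c0 : 0 < h - q by clear -qh; lra.
  have dp : 0 < (h - q) / (Lph + 1) by rewrite divr_gt0 //; clear -Lph0; lra.
  have [tau [tau0 tauT taut [Ga Gb]]] := dens t ta tb _ dp.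
  have Ou := uOm tau (inI tau tau0 tauT).
  have h1 := Bq _ Ou.
  have h2 := LipPhi _ Ou tau t tau0 tauT ta tb.
  have h3 := small Lph0 c0 (normr_ge0 _) taut.
  have Gb' : phi (u tau) tau = h := Gb.
  have := ler_norm (phi (u tau) tau - phi (u tau) t).
  move=> h4; clear -h1 h2 h3 h4 Gb'; lra.
rewrite /horizontal_geodesic; exists s; split => //.
exists (h / `|px|), c; split; first by rewrite divr_gt0.
split.
  move=> t tI; have [ta tb] := tI2 t tI.
  exists (y t * px / h, y t * py t / h); split.
    split; last exact: NotInt.
    apply: subset_closure => v Ov; rewrite /dotp /=.
    have -> : y t * px / h * v.1 + y t * py t / h * v.2 = phi v t / h.
      by rewrite /phi; field; apply/eqP; clear -hp; lra.
    by rewrite ler_pdivrMr // mul1r; exact: Pol.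
  rewrite /rot90 /= KI //.
  congr (_, _); rewrite -hs2; case: hs1 => ->; field; apply/andP; split; apply/eqP; clear -hp pxn0; lra.
apply: (@filterS _ _ (ae_filter_ringOfSetsType _) _ _ _ Hae) => t Ht tI.
have [_ Gb] := Ht tI; have [ta tb] := tI2 t tI.
rewrite /cross /= KI //.
have E : s * (- (y t * py t / px) * (y t * (u t).2) - y t * (y t * (u t).1)) =
    - (y t * h / `|px|).
  by rewrite -Gb /dotp /= -hs2; case: hs1 => ->; field.
rewrite E oppr_lt0; apply: divr_gt0 => //; apply: mulr_gt0 => //; exact: ypos.
Qed.
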